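(* Let $\mathbb X,\mathbb Y$ be Euclidean spaces, $g\colon\mathbb X\to\mathbb Y$ twice continuously differentiable, $D\subset\mathbb Y$ closed, $\Phi(x):=g(x)-D$, $(\bar x,0)\in\operatorname{gph}\Phi$, $u\in\mathbb S_{\mathbb X}$. Assume FOSCMS$(u)$: for all $y^*$, [$\nabla g(\bar x)^*y^*=0$, $y^*\in\mathcal N_D(g(\bar x);\nabla g(\bar x)u)$] implies $y^*=0$. Then all of the following hold: (Q1) for all $y^*,z^*$: [$\nabla g(\bar x)^*y^*=0$, $\nabla^2\langle y^*,g\rangle(\bar x)(u)+\nabla g(\bar x)^*z^*=0$, $y^*\in\mathcal N_D(g(\bar x);\nabla g(\bar x)u)$, $z^*\in D\mathcal N_D(g(\bar x),y^* )(\nabla g(\bar x)u)$] implies $y^*=0$; either (Q2): for all $y^*,\hat z^*$: [$\nabla g(\bar x)^*y^*=0$, $\nabla g(\bar x)^*\hat z^*=0$, $y^*\in\mathcal N_D(g(\bar x);\nabla g(\bar x)u)$, $\hat z^*\in D\mathcal N_D(g(\bar x),y^* )(0)$] implies $\hat z^*=0$, or (Q3): $\nabla g(\bar x)u\ne0$ and for all $y^*,\hat z^*$: [$\nabla g(\bar x)^*y^*=0$, $\nabla g(\bar x)^*\hat z^*=0$, $y^*\in\mathcal N_D(g(\bar x);\nabla g(\bar x)u)$] implies $\hat z^*\notin D_{\mathrm{sub}}\mathcal N_D(g(\bar x),y^* )(\nabla g(\bar x)u/\|\nabla g(\bar x)u\|)$; and for each $x^*\in\mathbb X$ and $y^*,z^*\in\mathbb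 Y$ with $x^*=\nabla^2\langle y^*,g\rangle(\bar x)(u)+\nabla g(\bar x)^*z^*$, $y^*\in\mathcal N_D(g(\bar x);\nabla g(\bar x)u)\cap\ker\nabla g(\bar x)^*$, $z^*\in D\mathcal N_D(g(\bar x),y^* )(\nabla g(\bar x)u)$, there is $\lambda\in\mathcal N_D(g(\bar x))$ with $x^*=\nabla g(\bar x)^*\lambda$.
   Context: $\nabla^2\langle y^*,g\rangle(\bar x)(u)$ is the Hessian of $x\mapsto\langle y^*,g(x)\rangle$ applied to $u$. $\mathcal N_D$ is the limiting normal cone; $\mathcal N_D(y;w)$ the directional limiting normal cone (all $\eta$ with $w_k\to w$, $t_k\downarrow0$, $\eta_k\to\eta$, $\eta_k\in\widehat{\mathcal N}_D(y+t_kw_k)$, $\widehat{\mathcal N}$ regular normal cone). $D\mathcal N_D(\bar y,\bar y^* )$ is the graphical derivative of the normal cone mapping (graph $=\mathcal T_{\operatorname{gph}\mathcal N_D}(\bar y,\bar y^* )$); $D_{\mathrm{sub}}\mathcal N_D(\bar y,\bar y^* )(w)$, $w\in\mathbb S_{\mathbb Y}$, is the set of $q\in\mathbb S_{\mathbb Y}$ with $w_k\to w$, $q_k\to q$, $t_k,\tau_k\downarrow0$, $\tau_k/t_k\to\infty$ and $\bar y^*+\tau_kq_k\in\mathcal N_D(\bar y+t_kw_k)$. *)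

(* Defs.v *)
From HB Require Import structures.
From mathcomp Require Import all_boot all_order all_algebra.
From mathcomp Require Import all_classical all_reals all_analysis.
Set Implicit Arguments. Unset Strict Implicit. Unset Printing Implicit Defensive.
Import Order.TTheory GRing.Theory Num.Theory.
Import numFieldNormedType.Exports.
Local Open Scope classical_set_scope.
Local Open Scope ring_scope.

Section Defs.
Variable R : realType.

Definition dot (k : nat) (a b : 'rV[R]_k) : R := (a *m b^T) 0 0.
Definition enorm (k : nat) (a : 'rV[R]_k) : R := Num.sqrt (dot a a).

Definition C2 (n m : nat) (g : 'rV[R]_n -> 'rV[R]_m) : Prop :=
  (forall x, differentiable g x) /\
  (forall (v x : 'rV[R]_n), differentiable (fun z => 'd g z v) x) /\
  (forall (v w : 'rV[R]_n),
      continuous (fun z => 'd (fun z' => 'd g z' v) z w)).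

(* <grad^2 <y*, g>(xbar)(u), w> : second derivative of x |-> <y*, g x> *)
Definition hess_pair (n m : nat) (g : 'rV[R]_n -> 'rV[R]_m) (ys : 'rV[R]_m)
    (xbar u w : 'rV[R]_n) : R :=
  'd (fun x => 'd (fun x' => (dot ys (g x') : R^o)) x u) xbar w.

(* regular (Frechet) normal cone; empty outside D *)
Definition rnormal (m : nat) (D : set 'rV[R]_m) (y eta : 'rV[R]_m) : Prop :=
  D y /\ forall e : R, 0 < e -> exists2 d : R, 0 < d &
    forall y', D y' -> enorm (y' - y) < d -> dot eta (y' - y) <= e * enorm (y' - y).

Definition lnormal (m : nat) (D : set 'rV[R]_m) (y eta : 'rV[R]_m) : Prop :=
  exists (yk etak : nat -> 'rV[R]_m),
    [/\ yk @ \oo --> y, etak @ \oo --> eta & forall k, rnormal D (yk k) (etak k)].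

Definition dnormal (m : nat) (D : set 'rV[R]_m) (y w eta : 'rV[R]_m) : Prop :=
  exists (tk : nat -> R) (wk etak : nat -> 'rV[R]_m),
    [/\ (forall k, 0 < tk k), tk @ \oo --> 0, wk @ \oo --> w,
        etak @ \oo --> eta & forall k, rnormal D (y + tk k *: wk k) (etak k)].

(* graphical derivative DN_D(y, ys)(w): z with (w,z) in the tangent cone to
   gph N_D at (y, ys) *)
Definition gderN (m : nat) (D : set 'rV[R]_m) (y ys w z : 'rV[R]_m) : Prop :=
  exists (tk : nat -> R) (wk zk : nat -> 'rV[R]_m),
    [/\ (forall k, 0 < tk k), tk @ \oo --> 0, wk @ \oo --> w,
        zk @ \oo --> z & forall k, lnormal D (y + tk k *: wk k) (ys + tk k *: zk k)].

(* D_sub N_D(y, ys)(w) (meaningful for w in the unit sphere) *)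
Definition subderN (m : nat) (D : set 'rV[R]_m) (y ys w q : 'rV[R]_m) : Prop :=
  enorm q = 1 /\
  exists (tk tauk : nat -> R) (wk qk : nat -> 'rV[R]_m),
    [/\ (forall k, 0 < tk k) /\ (forall k, 0 < tauk k),
        tk @ \oo --> 0 /\ tauk @ \oo --> 0,
        (fun k => tauk k / tk k) @ \oo --> +oo,
        wk @ \oo --> w /\ qk @ \oo --> q
      & forall k, lnormal D (y + tk k *: wk k) (ys + tauk k *: qk k)].

End Defs.

(* Main.v *)
Require Import Defs.
From HB Require Import structures.
From mathcomp Require Import all_boot all_order all_algebra.
From mathcomp Require Import all_classical all_reals all_analysis.
Import Order.TTheory GRing.Theory Num.Theory.
Import numFieldNormedType.Exports.
Local Open Scope classical_set_scope.
Local Open Scope ring_scope.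

Lemma near_ex (P : nat -> Prop) : (\forall k \near \oo, P k) -> exists k, P k.
Proof. move=> H; near \oo => k. exists k. near: k. exact: H. Unshelve. all: by end_near. Qed.

Lemma zmod_id (V : zmodType) (a b c d : V) : a - (b - c) = (a - d) + ((c + d) - b).
Proof. by rewrite opprB !addrA [a - d + c]addrAC addrNK. Qed.

Section H.
Variable R : realType.
Variable m : nat.
Implicit Types (D : set 'rV[R]_m) (y w eta : 'rV[R]_m).

Lemma dotZl k (t : R) (a b : 'rV[R]_k) : dot (t *: a) b = t * dot a b.
Proof. by rewrite /dot -scalemxAl mxE. Qed.

Lemma rnormal_scale D y eta (t : R) : 0 < t -> rnormal D y (t *: eta) -> rnormal D y eta.
Proof.
move=> t0 [Dy H]; split=> // e e0.
have [d d0 Hd] := H (t * e) (mulr_gt0 t0 e0).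
exists d => // y' Dy' hy; have := Hd y' Dy' hy.
by rewrite dotZl -mulrA ler_pM2l.
Qed.

Lemma seq_cvg (a : nat -> 'rV[R]_m) l : (forall k, `|l - a k| < k.+1%:R^-1) -> a @ \oo --> l.
Proof.
move=> H; apply/cvgrPdist_lt => e e0; near=> k.
apply: lt_trans (H k) _; near: k; exact: (near_infty_natSinv_lt (PosNum e0)).
Unshelve. all: by end_near.
Qed.

Lemma seq_cvgR (a : nat -> R) : (forall k, 0 < a k < k.+1%:R^-1) -> a @ \oo --> 0.
Proof.
move=> H; apply/cvgrPdist_lt => e e0; near=> k.
have /andP[h1 h2] := H k.
rewrite sub0r normrN gtr0_norm //.
apply: lt_trans h2 _; near: k; exact: (near_infty_natSinv_lt (PosNum e0)).
Unshelve. all: by end_near.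
Qed.

Lemma lnormal_near D y eta : lnormal D y eta -> forall e : R, 0 < e ->
  exists y' eta', [/\ `|y - y'| < e, `|eta - eta'| < e & rnormal D y' eta'].
Proof.
case=> yk [ek [Hy He Hr]] e e0.
have [k [h1 h2]] : exists k, `|y - yk k| < e /\ `|eta - ek k| < e.
  apply: near_ex; near=> k; split; near: k.
    exact: cvgr_dist_lt Hy _ e0.
  exact: cvgr_dist_lt He _ e0.
by exists (yk k), (ek k).
Unshelve. all: by end_near.
Qed.

Lemma near_dnormal D y w eta :
  (forall e : R, 0 < e -> exists t w' eta',
     [/\ 0 < t < e, `|w - w'| < e, `|eta - eta'| < e & rnormal D (y + t *: w') eta']) ->
  dnormal D y w eta.
Proof.
move=> H.
have H' (k : nat) : exists p : R * ('rV[R]_m * 'rV[R]_m),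
   [/\ 0 < p.1 < k.+1%:R^-1, `|w - p.2.1| < k.+1%:R^-1, `|eta - p.2.2| < k.+1%:R^-1
     & rnormal D (y + p.1 *: p.2.1) p.2.2].
  have [t [w' [eta' [h1 h2 h3 h4]]]] := H (k.+1%:R^-1) ltac:(by rewrite invr_gt0).
  by exists (t, (w', eta')).
have [f Hf] := choice H'.
exists (fun k => (f k).1), (fun k => (f k).2.1), (fun k => (f k).2.2); split.
- by move=> k; have [/andP[]] := Hf k.
- by apply: seq_cvgR => k; have [] := Hf k.
- by apply: seq_cvg => k; have [] := Hf k.
- by apply: seq_cvg => k; have [] := Hf k.
- by move=> k; have [] := Hf k.
Qed.

Lemma dnormal_lnormal D y w eta : dnormal D y w eta -> lnormal D y eta.
Proof.
case=> tk [wk [ek [h0 ht hw he hr]]].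
exists (fun k => y + tk k *: wk k), ek; split => //.
have := cvgD (cvg_cst y) (cvgZ ht hw); rewrite scale0r addr0; exact.
Qed.

Lemma key D y w q (tk sk : nat -> R) (wk qk : nat -> 'rV[R]_m) :
 (forall k, 0 < tk k) -> (forall k, 0 < sk k) -> tk @ \oo --> 0 -> wk @ \oo --> w ->
 qk @ \oo --> q ->
 (forall k, lnormal D (y + tk k *: wk k) (sk k *: qk k)) -> dnormal D y w q.
Proof.
move=> t0 s0 ht hw hq hl; apply: near_dnormal => e e0.
have e2 : 0 < e / 2 by rewrite divr_gt0.
have [k [h1 [h2 h3]]] : exists k, `|0 - tk k| < e /\ `|w - wk k| < e / 2 /\ `|q - qk k| < e / 2.
  apply: near_ex; near=> k; split; [|split]; near: k.
  - exact: cvgr_dist_lt ht _ e0.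
  - exact: cvgr_dist_lt hw _ e2.
  - exact: cvgr_dist_lt hq _ e2.
move: h1; rewrite sub0r normrN gtr0_norm // => h1.
have tk0 := t0 k; have sk0 := s0 k.
have eps0 : 0 < Num.min (tk k * (e / 2)) (sk k * (e / 2)) by rewrite lt_min !mulr_gt0.
have [y' [eta' [hy he hr]]] := lnormal_near _ _ _ (hl k) _ eps0.
move: hy he; rewrite !lt_min => /andP[hy _] /andP[_ he].
exists (tk k), ((tk k)^-1 *: (y' - y)), ((sk k)^-1 *: eta'); split.
- by rewrite tk0 h1.
- rewrite scalerBr (zmod_id _ _ _ _ (wk k)).
  have -> : (tk k)^-1 *: y + wk k - (tk k)^-1 *: y' = (tk k)^-1 *: ((y + tk k *: wk k) - y').
    by rewrite scalerBr scalerDr scalerA mulVf ?gt_eqF // scale1r.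
  apply: le_lt_trans (ler_normD _ _) _.
  rewrite normrZ gtr0_norm ?invr_gt0 // [e]splitr ltrD //.
  by rewrite mulrC ltr_pdivrMr // mulrC.
- have -> : q - (sk k)^-1 *: eta' = (q - qk k) + (sk k)^-1 *: (sk k *: qk k - eta').
    by rewrite scalerBr scalerA mulVf ?gt_eqF // scale1r addrA subrK.
  apply: le_lt_trans (ler_normD _ _) _.
  rewrite normrZ gtr0_norm ?invr_gt0 // [e]splitr ltrD //.
  by rewrite mulrC ltr_pdivrMr // mulrC.
- rewrite scalerA mulfV ?gt_eqF // scale1r addrC subrK.
  apply: (rnormal_scale _ _ _ _ sk0).
  by rewrite scalerA mulfV ?gt_eqF // scale1r.
Unshelve. all: by end_near.
Qed.

Lemma dot_sum (w : 'rV[R]_m) : dot w w = \sum_j w 0 j ^+ 2.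
Proof. by rewrite /dot mxE; apply: eq_bigr => j _; rewrite mxE expr2. Qed.

Lemma enorm_gt0 (w : 'rV[R]_m) : w != 0 -> 0 < enorm w.
Proof.
move=> wn0; rewrite /enorm sqrtr_gt0 dot_sum lt_def; apply/andP; split; last first.
  by rewrite sumr_ge0 // => j _; rewrite sqr_ge0.
apply: contra wn0 => /eqP H; apply/eqP/matrixP => i j; rewrite (ord1 i) mxE.
have := @psumr_eq0P _ _ xpredT (fun l => w 0 l ^+ 2) (fun l _ => sqr_ge0 _) H j isT.
by move/eqP; rewrite sqrf_eq0 => /eqP.
Qed.

Lemma enorm0 : enorm (0 : 'rV[R]_m) = 0.
Proof. by rewrite /enorm dot_sum big1 ?sqrtr0 // => j _; rewrite mxE expr0n. Qed.

End H.

Lemma hess0 (R : realType) (n m : nat) (g : 'rV[R]_n -> 'rV[R]_m) (xbar u v : 'rV[R]_n) :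
  hess_pair g 0 xbar u v = 0.
Proof.
have E : (fun x' => (dot 0 (g x') : R^o)) = cst 0.
  by apply: funext => x'; rewrite /dot mul0mx mxE.
have E2 : (fun x => 'd (fun x' => (dot 0 (g x') : R^o)) x u) = cst 0.
  by apply: funext => x; rewrite E diff_cst.
by rewrite /hess_pair E2 diff_cst.
Qed.

Theorem proposition5p20 (R : realType) (n m : nat)
  (g : 'rV[R]_n -> 'rV[R]_m) (D : set 'rV[R]_m) (xbar u : 'rV[R]_n) :
  C2 g -> closed D -> D (g xbar) -> enorm u = 1 ->
  (* FOSCMS(u) *)
  (forall ys : 'rV[R]_m,
     (forall w, dot ys ('d g xbar w) = 0) ->
     dnormal D (g xbar) ('d g xbar u) ys -> ys = 0) ->
  (* (Q1) *)
  (forall ys zs : 'rV[R]_m,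
     (forall w, dot ys ('d g xbar w) = 0) ->
     (forall w, hess_pair g ys xbar u w + dot zs ('d g xbar w) = 0) ->
     dnormal D (g xbar) ('d g xbar u) ys ->
     gderN D (g xbar) ys ('d g xbar u) zs -> ys = 0)
  /\
  ( (* (Q2) *)
    (forall ys zh : 'rV[R]_m,
       (forall w, dot ys ('d g xbar w) = 0) ->
       (forall w, dot zh ('d g xbar w) = 0) ->
       dnormal D (g xbar) ('d g xbar u) ys ->
       gderN D (g xbar) ys 0 zh -> zh = 0)
    \/
    (* (Q3) *)
    ('d g xbar u <> 0 /\
     forall ys zh : 'rV[R]_m,
       (forall w, dot ys ('d g xbar w) = 0) ->
       (forall w, dot zh ('d g xbar w) = 0) ->
       dnormal D (g xbar) ('d g xbar u) ys ->
       ~ subderN D (g xbar) ys ((enorm ('d g xbar u))^-1 *: 'd g xbar u) zh))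
  /\
  (forall (xs : 'rV[R]_n) (ys zs : 'rV[R]_m),
     (forall w, dot xs w = hess_pair g ys xbar u w + dot zs ('d g xbar w)) ->
     dnormal D (g xbar) ('d g xbar u) ys ->
     (forall w, dot ys ('d g xbar w) = 0) ->
     gderN D (g xbar) ys ('d g xbar u) zs ->
     exists lam : 'rV[R]_m,
       lnormal D (g xbar) lam /\ forall w, dot xs w = dot lam ('d g xbar w)).

Proof.
move=> hC2 hcl hD hu FO.
split; first by move=> ys zs h1 _ h3 _; exact: FO.
split.
- have [w0|wn0] := eqVneq ('d g xbar u) 0.
  + left => ys zh h1 h2 h3 [tk [wk [zk [t0 ht hw hz hl]]]].
    have ys0 := FO ys h1 h3; subst ys.
    apply: FO h2 _; rewrite w0.
    apply: (key _ _ _ _ _ _ tk tk wk zk) => // k.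
    by have := hl k; rewrite add0r.
  + right; split; first exact/eqP.
    move=> ys zh h1 h2 h3 [hn [tk [tauk [wk [qk [[t0 s0] [ht _] _ [hw hq] hl]]]]]].
    have ys0 := FO ys h1 h3; subst ys.
    have c0 := enorm_gt0 _ _ _ wn0.
    have : dnormal D (g xbar) ('d g xbar u) zh.
      apply: (key _ _ _ _ _ _ (fun k => tk k / enorm ('d g xbar u)) tauk
                (fun k => enorm ('d g xbar u) *: wk k) qk) => //.
      - by move=> k; rewrite divr_gt0.
      - have HH := cvgM ht (cvg_cst (enorm ('d g xbar u))^-1); rewrite mul0r in HH; apply: HH; typeclasses eauto.
      - have HH := cvgZ (cvg_cst (enorm ('d g xbar u))) hw.
        rewrite scalerA mulfV ?gt_eqF // scale1r in HH; apply: HH; typeclasses eauto.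
      - move=> k; rewrite scalerA mulfVK ?gt_eqF //.
        by have := hl k; rewrite add0r.
    move/(FO zh h2) => zh0; move: hn; rewrite zh0 enorm0 => /eqP.
    by rewrite eq_sym oner_eq0.
- move=> xs ys zs hx h3 h1 [tk [wk [zk [t0 ht hw hz hl]]]].
  have ys0 := FO ys h1 h3; subst ys.
  exists zs; split.
  + apply: (dnormal_lnormal _ _ _ _ ('d g xbar u)).
    apply: (key _ _ _ _ _ _ tk tk wk zk) => // k.
    by have := hl k; rewrite add0r.
  + by move=> v; rewrite hx hess0 add0r.
Qed.
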